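(* Let $\mathbb{X}=\ell_\infty^3$ and let $\mathbb{Y}$ be a two-dimensional strictly convex, smooth Banach space. Let $x_1=(1,1,1)$, $x_2=(-1,1,1)$, $x_3=(-1,-1,1)$, $x_4=(1,-1,1)$. Let $T\in\mathbb{L}(\mathbb{X},\mathbb{Y})$ with $\|T\|=1$ and $M_T\cap\operatorname{Ext}(B_{\mathbb{X}})=\{\pm x_1,\pm x_2,\pm x_3,\pm x_4\}$. Then: (i) if $\operatorname{Rank}(T)=1$, then $T$ is $3$-smooth; (ii) if $\operatorname{Rank}(T)=2$, then $T$ is $4$-smooth.
   Context: $\mathbb{L}(\mathbb{X},\mathbb{Y})$ is the space of linear operators with the operator norm. $B_{\mathbb{X}}$ is the closed unit ball, $\operatorname{Ext}$ its set of extreme points, $M_T=\{x\in\mathbb{X}:\|x\|=1,\ \|Tx\|=\|T\|\}$. A Banach space is strictly convex if its unit sphere contains no nontrivial line segment, and smooth if every unit vector has a unique norm-one supporting functional. For a Banach space $\mathbb{Z}$ and a unit vector $z$, $J(z)=\{f\in \mathbb{Z}^*:\|f\|=1,\ f(z)=1\}$; $z$ is $k$-smooth if $\dim\operatorname{span} J(z)=k$ ($T$ considered in the unit sphere of $\mathbb{L}(\mathbb{X},\mathbb{Y})$). *)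

(* Defs.v *)
From HB Require Import structures.
From mathcomp Require Import all_boot all_order all_algebra.
From mathcomp Require Import boolp classical_sets reals.
Set Implicit Arguments. Unset Strict Implicit. Unset Printing Implicit Defensive.
Import Order.TTheory GRing.Theory Num.Theory.
Local Open Scope ring_scope.
Local Open Scope classical_set_scope.

Section Defs.
Variable R : realType.

Definition supn n (x : 'rV[R]_n) : R := \big[Num.max/0]_(i < n) `|x 0 i|.

Definition is_norm n (N : 'rV[R]_n -> R) : Prop :=
  (forall x, N x = 0 -> x = 0) /\
  (forall (a : R) x, N (a *: x) = `|a| * N x) /\
  (forall x y, N (x + y) <= N x + N y).

(* operators X = l_infty^3 -> Y = (R^2, N) are 3x2 matrices acting by x |-> x *m T *)
Definition opnorm (N : 'rV[R]_2 -> R) (T : 'M[R]_(3, 2)) : R :=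
  sup [set N (x *m T) | x in [set x : 'rV[R]_3 | supn x <= 1]].

(* functionals on Y : g : 'rV_2, acting by the standard pairing *)
Definition pairY (g y : 'rV[R]_2) : R := \sum_(i < 2) g 0 i * y 0 i.
Definition dualnormY (N : 'rV[R]_2 -> R) (g : 'rV[R]_2) : R :=
  sup [set `|pairY g y| | y in [set y | N y <= 1]].

Definition strictly_convex (N : 'rV[R]_2 -> R) : Prop :=
  forall x y, N x = 1 -> N y = 1 ->
    (forall t : R, 0 <= t <= 1 -> N ((1 - t) *: x + t *: y) = 1) -> x = y.

Definition smooth (N : 'rV[R]_2 -> R) : Prop :=
  forall y, N y = 1 -> forall g1 g2,
    dualnormY N g1 = 1 -> pairY g1 y = 1 ->
    dualnormY N g2 = 1 -> pairY g2 y = 1 -> g1 = g2.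

(* functionals on L(X,Y) = 'M_(3,2): F acting by the trace pairing *)
Definition pairL (F S : 'M[R]_(3, 2)) : R := \sum_(i < 3) \sum_(j < 2) F i j * S i j.
Definition dualnormL (N : 'rV[R]_2 -> R) (F : 'M[R]_(3, 2)) : R :=
  sup [set `|pairL F S| | S in [set S | opnorm N S <= 1]].

Definition Jset (N : 'rV[R]_2 -> R) (T : 'M[R]_(3, 2)) : set 'M[R]_(3, 2) :=
  [set F | dualnormL N F = 1 /\ pairL F T = 1].

(* dim span S = k : S contains k linearly independent elements spanning S *)
Definition span_dim (S : set 'M[R]_(3, 2)) (k : nat) : Prop :=
  exists B : 'M[R]_(k, 3 * 2),
    (forall i, S (vec_mx (row i B))) /\ row_free B /\
    (forall F, S F -> (mxvec F <= B)%MS).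

Definition ksmooth (N : 'rV[R]_2 -> R) (T : 'M[R]_(3, 2)) (k : nat) : Prop :=
  span_dim (Jset N T) k.

Definition MT (N : 'rV[R]_2 -> R) (T : 'M[R]_(3, 2)) : set 'rV[R]_3 :=
  [set x | supn x = 1 /\ N (x *m T) = opnorm N T].

Definition ext_ball (x : 'rV[R]_3) : Prop :=
  supn x <= 1 /\
  forall y z (t : R), supn y <= 1 -> supn z <= 1 -> 0 < t < 1 ->
    x = (1 - t) *: y + t *: z -> y = z.

Definition mk3 (a b c : R) : 'rV[R]_3 := \row_(i < 3) [:: a; b; c]`_i.
Definition x1 := mk3 1 1 1.
Definition x2 := mk3 (-1) 1 1.
Definition x3 := mk3 (-1) (-1) 1.
Definition x4 := mk3 1 (-1) 1.

End Defs.

(* Main.v *)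
Require Import Defs.
From HB Require Import structures.
From mathcomp Require Import all_boot all_order all_algebra.
From mathcomp Require Import boolp classical_sets reals.
From mathcomp Require Import lra ring.
Import Order.TTheory GRing.Theory Num.Theory.
Local Open Scope ring_scope.
Local Open Scope classical_set_scope.

Section Basic.
Variable R : realType.

Lemma ord2 (j : 'I_2) : j = ord0 \/ j = ord_max.
Proof. case: j => [[|[|]]] //= H; [left|right]; exact: val_inj. Qed.

Lemma pairYE (g y : 'rV[R]_2) :
  pairY g y = g 0 ord0 * y 0 ord0 + g 0 ord_max * y 0 ord_max.
Proof.
rewrite /pairY big_ord_recr big_ord1 /=.
by rewrite (_ : widen_ord _ ord0 = ord0) //; apply: val_inj.
Qed.

Lemma pairYD g (y z : 'rV[R]_2) : pairY g (y + z) = pairY g y + pairY g z.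
Proof. rewrite !pairYE !mxE; ring. Qed.
Lemma pairYZ g a (y : 'rV[R]_2) : pairY g (a *: y) = a * pairY g y.
Proof. rewrite !pairYE !mxE; ring. Qed.
Lemma pairYN g (y : 'rV[R]_2) : pairY g (- y) = - pairY g y.
Proof. rewrite !pairYE !mxE; ring. Qed.
Lemma pairYZl g a (y : 'rV[R]_2) : pairY (a *: g) y = a * pairY g y.
Proof. rewrite !pairYE !mxE; ring. Qed.

Lemma rv2P (y z : 'rV[R]_2) : y 0 ord0 = z 0 ord0 -> y 0 ord_max = z 0 ord_max -> y = z.
Proof. by move=> h0 h1; apply/rowP => j; case: (ord2 j) => ->. Qed.

Lemma mulmx_sum3 (x : 'rV[R]_3) (A : 'M[R]_(3,2)) :
  x *m A = x 0 ord0 *: row ord0 A + (x 0 (lift ord0 ord0) *: row (lift ord0 ord0) A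
     + x 0 (lift ord0 (lift ord0 ord0)) *: row (lift ord0 (lift ord0 ord0)) A).
Proof. by rewrite mulmx_sum_row !big_ord_recl big_ord0 addr0. Qed.

Lemma mk3_mul (a b c : R) (A : 'M[R]_(3,2)) : mk3 a b c *m A =
  a *: row ord0 A + (b *: row (lift ord0 ord0) A + c *: row (lift ord0 (lift ord0 ord0)) A).
Proof. by rewrite mulmx_sum3 !mxE. Qed.

Lemma supn_ge (x : 'rV[R]_3) i : `|x 0 i| <= supn x.
Proof.
rewrite /supn !big_ord_recl big_ord0.
have [->|[->|->]] : i = ord0 \/ i = lift ord0 ord0 \/ i = lift ord0 (lift ord0 ord0).
  by case: i => [[|[|[|]]]] //= H; [left|right;left|right;right]; apply: val_inj.
- by rewrite le_max lexx.
- by rewrite le_max (le_max _ _ (Num.max _ _)) lexx orbT.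
- by rewrite le_max (le_max _ _ (Num.max _ _)) le_max lexx !orbT.
Qed.

Lemma supn_mk3 (a b c : R) : `|a| <= 1 -> `|b| <= 1 -> `|c| <= 1 -> supn (mk3 a b c) <= 1.
Proof.
move=> ha hb hc; rewrite /supn !big_ord_recl big_ord0 !mxE /=.
by rewrite !ge_max ha hb hc ler01.
Qed.


Section NormLemmas.
Variable N : 'rV[R]_2 -> R.
Hypothesis hN : is_norm N.

Lemma NZ a x : N (a *: x) = `|a| * N x.
Proof. by case: hN => _ [h _]. Qed.
Lemma ND x y : N (x + y) <= N x + N y.
Proof. by case: hN => _ [_ h]. Qed.
Lemma N0 : N 0 = 0.
Proof. by rewrite -(scale0r 0) NZ normr0 mul0r. Qed.
Lemma NN x : N (- x) = N x.
Proof. by rewrite -scaleN1r NZ normrN normr1 mul1r. Qed.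
Lemma Nge0 x : 0 <= N x.
Proof.
have := ND x (- x); rewrite subrr N0 NN => h.
by rewrite -(@pmulr_rge0 _ 2) //; lra.
Qed.
Lemma NZp a x : 0 <= a -> N (a *: x) = a * N x.
Proof. by move=> ha; rewrite NZ ger0_norm. Qed.
Lemma Nconv a b x y : 0 <= a -> 0 <= b -> N (a *: x + b *: y) <= a * N x + b * N y.
Proof. by move=> ha hb; rewrite -(@NZp a x ha) -(@NZp b y hb) ND. Qed.

Lemma conv1 r u a M : `|a| <= 1 -> N (r + u) <= M -> N (- r + u) <= M ->
  N (a *: r + u) <= M.
Proof.
move=> ha h1 h2.
have -> : a *: r + u = ((1 + a) / 2) *: (r + u) + ((1 - a) / 2) *: (- r + u).
  by apply/rowP => j; rewrite !mxE; field.
have ha' := ha; rewrite ler_norml in ha'; case/andP: ha' => ha1 ha2.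
have p1 : 0 <= (1 + a) / 2 by apply: divr_ge0 => //; lra.
have p2 : 0 <= (1 - a) / 2 by apply: divr_ge0 => //; lra.
apply: le_trans (Nconv _ _ (r + u) (- r + u) p1 p2) _.
have e1 : (1 + a) / 2 * N (r + u) <= (1 + a) / 2 * M.
  by apply: ler_wpM2l => //; apply: divr_ge0 => //; lra.
have e2 : (1 - a) / 2 * N (- r + u) <= (1 - a) / 2 * M.
  by apply: ler_wpM2l => //; apply: divr_ge0 => //; lra.
have -> : M = (1 + a) / 2 * M + (1 - a) / 2 * M by field.
exact: lerD.
Qed.

Lemma conv1' r u a M : `|a| <= 1 -> (forall s : R, s = 1 \/ s = -1 -> N (s *: r + u) <= M) ->
  N (a *: r + u) <= M.
Proof.
move=> ha h; apply: conv1 => //.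
  by have := h 1 (or_introl erefl); rewrite scale1r.
by have := h (-1) (or_intror erefl); rewrite scaleN1r.
Qed.

Lemma mk3_neg (a b c : R) (A : 'M[R]_(3,2)) :
  N (mk3 (- a) (- b) (- c) *m A) = N (mk3 a b c *m A).
Proof. by rewrite !mk3_mul !scaleNr -!opprD NN. Qed.

Lemma ball_bound (A : 'M[R]_(3,2)) M :
  (forall a b : R, a = 1 \/ a = -1 -> b = 1 \/ b = -1 -> N (mk3 a b 1 *m A) <= M) ->
  forall x, supn x <= 1 -> N (x *m A) <= M.
Proof.
move=> h x hx.
have hs : forall a b c : R, a = 1 \/ a = -1 -> b = 1 \/ b = -1 -> c = 1 \/ c = -1 ->
    N (mk3 a b c *m A) <= M.
  move=> a b c ha hb [->|->]; first exact: h.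
  rewrite -[a]opprK -[b]opprK mk3_neg; apply: h.
    by case: ha => ->; rewrite ?opprK; [right|left].
  by case: hb => ->; rewrite ?opprK; [right|left].
rewrite mulmx_sum3.
set r0 := row _ A; set r1 := row _ A; set r2 := row _ A.
set a := x 0 _; set b := x 0 _; set c := x 0 _.
have ha : `|a| <= 1 := le_trans (supn_ge _ _) hx.
have hb : `|b| <= 1 := le_trans (supn_ge _ _) hx.
have hc : `|c| <= 1 := le_trans (supn_ge _ _) hx.
apply: conv1' => // a' ha'.
rewrite addrCA; apply: conv1' => // b' hb'.
rewrite (addrC (a' *: r0)) addrCA; apply: conv1' => // c' hc'.
have := hs a' b' c' ha' hb' hc'.
rewrite mk3_mul -/r0 -/r1 -/r2; congr (N _ <= M).
by apply/rowP => j; rewrite !mxE; ring.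
Qed.


Definition supp (v g : 'rV[R]_2) := pairY g v = 1 /\ forall y, pairY g y <= N y.

Lemma supp_abs v g : supp v g -> forall y, `|pairY g y| <= N y.
Proof.
case=> _ h y; rewrite ler_norml h andbT.
by have := h (- y); rewrite pairYN NN; lra.
Qed.

Lemma supp_dual v g : N v = 1 -> supp v g -> dualnormY N g = 1.
Proof.
move=> hv hs; have ha := supp_abs _ _ hs.
rewrite /dualnormY; set E := (X in sup X).
have ub : ubound E 1 by move=> _ [y /= hy <-]; exact: le_trans (ha y) hy.
have E1 : E 1 by exists v; [rewrite /= hv | rewrite (proj1 hs) normr1].
apply/le_anti/andP; split; first by apply: ge_sup => //; exists 1.
by apply: ub_le_sup => //; exists 1.
Qed.

Lemma conv_slope v w s t : N v = 1 -> 0 < s -> 0 < t ->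
  t * (1 - N (v + s *: w)) <= s * (N (v - t *: w) - 1).
Proof.
move=> hv hs ht.
have e : (s + t) *: v = t *: (v + s *: w) + s *: (v - t *: w).
  by apply/rowP => j; rewrite !mxE; ring.
have := Nconv t s (v + s *: w) (v - t *: w) (ltW ht) (ltW hs).
rewrite -e NZp ?hv; last by apply: addr_ge0; apply: ltW.
lra.
Qed.

Definition slopes v w := [set (1 - N (v + s *: w)) / s | s in [set s : R | 0 < s]].

Lemma slopes_ub v w t : N v = 1 -> 0 < t -> ubound (slopes v w) ((N (v - t *: w) - 1) / t).
Proof.
move=> hv ht _ [s /= hs <-].
rewrite ler_pdivrMr // mulrAC ler_pdivlMr //.
have := @conv_slope v w s t hv hs ht; lra.
Qed.

Lemma slopes_sup v w : N v = 1 -> has_sup (slopes v w).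
Proof.
move=> hv; split; first by exists ((1 - N (v + 1 *: w)) / 1); exists 1 => //=.
by exists ((N (v - 1 *: w) - 1) / 1); apply: slopes_ub.
Qed.

Definition cdef v w := - sup (slopes v w).

Lemma H_of v w : N v = 1 -> forall s, 1 + s * cdef v w <= N (v + s *: w).
Proof.
move=> hv s; rewrite /cdef.
have [hs|hs|<-] := ltgtP 0 s; last by rewrite scale0r addr0 hv; lra.
- have : (1 - N (v + s *: w)) / s <= sup (slopes v w).
    by apply: (ub_le_sup (proj2 (slopes_sup v w hv))); exists s.
  rewrite ler_pdivrMr //; lra.
- have ht : 0 < - s by lra.
  have : sup (slopes v w) <= (N (v - (- s) *: w) - 1) / (- s).
    by apply: ge_sup; [case: (slopes_sup v w hv) | exact: slopes_ub].
  rewrite ler_pdivlMr // scaleNr opprK; lra.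
Qed.

Definition dd (v w : 'rV[R]_2) := v 0 ord0 * w 0 ord_max - v 0 ord_max * w 0 ord0.

Lemma supp_dir v w c : N v = 1 -> dd v w != 0 -> (forall s, 1 + s * c <= N (v + s *: w)) ->
  exists g, supp v g /\ pairY g w = c.
Proof.
move=> hv hd H.
have hd' : v 0 ord0 * w 0 ord_max - v 0 ord_max * w 0 ord0 != 0 := hd.
pose g : 'rV[R]_2 := \row_j (if j == ord0 then (w 0 ord_max - c * v 0 ord_max) / dd v w
                               else (c * v 0 ord0 - w 0 ord0) / dd v w).
have g0 : g 0 ord0 = (w 0 ord_max - c * v 0 ord_max) / dd v w by rewrite mxE.
have g1 : g 0 ord_max = (c * v 0 ord0 - w 0 ord0) / dd v w by rewrite mxE.
exists g; split; last by rewrite pairYE g0 g1; rewrite /dd; field.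
split; first by rewrite pairYE g0 g1; rewrite /dd; field.
move=> y.
pose a := (y 0 ord0 * w 0 ord_max - y 0 ord_max * w 0 ord0) / dd v w.
pose b := (v 0 ord0 * y 0 ord_max - v 0 ord_max * y 0 ord0) / dd v w.
have ey : y = a *: v + b *: w.
  by apply: rv2P; rewrite !mxE /a /b; rewrite /dd; field.
have eg : pairY g y = a + b * c.
  by rewrite pairYE g0 g1 /a /b; rewrite /dd; field.
rewrite eg.
have [ha|ha] := lerP a 1.
- have e2 : v + b *: w = y + (1 - a) *: v by rewrite ey; apply/rowP => j; rewrite !mxE; ring.
  have := ND y ((1 - a) *: v); rewrite -e2 NZp ?subr_ge0 //.
  have := H b.
  rewrite hv; lra.
- have hy : y = a *: (v + (b / a) *: w).
    rewrite ey; apply/rowP => j; rewrite !mxE; field; lra.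
  rewrite hy NZp; last by lra.
  have := H (b / a).
  have : a * (1 + b / a * c) = a + b * c by field; lra.
  move=> e h; rewrite -e; apply: ler_wpM2l; lra.
Qed.


Lemma supp_exists v : N v = 1 -> exists g, supp v g.
Proof.
move=> hv.
pose w : 'rV[R]_2 := \row_j (if j == ord0 then - v 0 ord_max else v 0 ord0).
have hd : dd v w != 0.
  rewrite /dd !mxE /=; apply/negP => /eqP h.
  have h0 : v 0 ord0 = 0 by nra.
  have h1 : v 0 ord_max = 0 by nra.
  have : v = 0 by apply: rv2P; rewrite mxE.
  by move=> e; move: hv; rewrite e N0; lra.
have [g [hg _]] := @supp_dir v w _ hv hd (@H_of v w hv).
by exists g.
Qed.

Lemma slope_mono v w s0 d : N v = 1 -> 0 < s0 -> N (v + s0 *: w) < 1 + s0 * d ->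
  forall s, 0 < s <= s0 -> N (v + s *: w) < 1 + s * d.
Proof.
move=> hv hs0 h s /andP [hs hss].
set l := s / s0.
have hl0 : 0 <= l by apply: divr_ge0; lra.
have hl1 : 0 <= 1 - l by rewrite subr_ge0 /l ler_pdivrMr // mul1r.
have hl : 0 < l by apply: divr_gt0.
have e : v + s *: w = (1 - l) *: v + l *: (v + s0 *: w).
  apply/rowP => j; rewrite !mxE /l; field; lra.
rewrite e; apply: le_lt_trans (Nconv _ _ _ _ hl1 hl0) _.
rewrite hv mulr1.
have : l * N (v + s0 *: w) < l * (1 + s0 * d) by rewrite ltr_pM2l.
have : l * s0 = s by rewrite /l divfK //; lra.
move=> e2; rewrite mulrDr mulr1 mulrA e2; lra.
Qed.

Lemma key v g0 w d : smooth N -> N v = 1 -> supp v g0 -> pairY g0 w = 0 -> 0 < d ->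
  exists s0, 0 < s0 /\ forall s, 0 < s <= s0 -> N (v + s *: w) < 1 + s * d.
Proof.
move=> hsm hv hg0 hw hd.
suff [s0 hs0 h] : exists2 s0, 0 < s0 & N (v + s0 *: w) < 1 + s0 * d.
  by exists s0; split => //; apply: slope_mono.
case: (pselect (exists2 s0, 0 < s0 & N (v + s0 *: w) < 1 + s0 * d)) => // hn.
have hall : forall s, 0 < s -> 1 + s * d <= N (v + s *: w).
  move=> s hs; rewrite leNgt; apply/negP => hlt; apply: hn; by exists s.
exfalso.
have [hdd|hdd] := eqVneq (dd v w) 0.
- have w0 : w = 0.
    case: hg0 => hgv _; move: hgv hw hdd; rewrite /dd !pairYE => h1 h2 h3.
    apply: rv2P; rewrite mxE.
    + have -> : w 0 ord0 = w 0 ord0 * (g0 0 ord0 * v 0 ord0 + g0 0 ord_max * v 0 ord_max) by rewrite h1 mulr1.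
      have -> : w 0 ord0 * (g0 0 ord0 * v 0 ord0 + g0 0 ord_max * v 0 ord_max) =
        v 0 ord0 * (g0 0 ord0 * w 0 ord0 + g0 0 ord_max * w 0 ord_max)
        - g0 0 ord_max * (v 0 ord0 * w 0 ord_max - v 0 ord_max * w 0 ord0) by ring.
      by rewrite h2 h3; ring.
    + have -> : w 0 ord_max = w 0 ord_max * (g0 0 ord0 * v 0 ord0 + g0 0 ord_max * v 0 ord_max) by rewrite h1 mulr1.
      have -> : w 0 ord_max * (g0 0 ord0 * v 0 ord0 + g0 0 ord_max * v 0 ord_max) =
        v 0 ord_max * (g0 0 ord0 * w 0 ord0 + g0 0 ord_max * w 0 ord_max)
        + g0 0 ord0 * (v 0 ord0 * w 0 ord_max - v 0 ord_max * w 0 ord0) by ring.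
      by rewrite h2 h3; ring.
  have := hall 1 ltr01; rewrite w0 scaler0 addr0 hv mul1r; lra.
- have [g [hg hgw]] := @supp_dir v w _ hv hdd (@H_of v w hv).
  have eg : g = g0.
    apply: (hsm v hv g g0 (@supp_dual v g hv hg) (proj1 hg) (@supp_dual v g0 hv hg0) (proj1 hg0)).
  have hc : d <= cdef v w.
    rewrite /cdef lerNr; apply: ge_sup; first by case: (slopes_sup v w hv).
    move=> _ [s /= hs <-]; rewrite ler_pdivrMr //; have := hall s hs; lra.
  move: hgw; rewrite eg hw => hc0; lra.
Qed.


Lemma pairLD F (A B : 'M[R]_(3,2)) : pairL F (A + B) = pairL F A + pairL F B.
Proof.
rewrite /pairL -big_split; apply: eq_bigr => i _; rewrite -big_split.
by apply: eq_bigr => j _; rewrite !mxE mulrDr.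
Qed.
Lemma pairLZ F a (A : 'M[R]_(3,2)) : pairL F (a *: A) = a * pairL F A.
Proof.
rewrite /pairL mulr_sumr; apply: eq_bigr => i _; rewrite mulr_sumr.
by apply: eq_bigr => j _; rewrite !mxE mulrCA.
Qed.
Lemma pairLN F (A : 'M[R]_(3,2)) : pairL F (- A) = - pairL F A.
Proof. by rewrite -scaleN1r pairLZ mulN1r. Qed.

Lemma pairL_F (x : 'rV[R]_3) (g : 'rV[R]_2) S : pairL (x^T *m g) S = pairY g (x *m S).
Proof.
rewrite /pairL /pairY exchange_big; apply: eq_bigr => j _.
rewrite mxE mulr_sumr; apply: eq_bigr => i _.
by rewrite !mxE big_ord1 !mxE mulrCA mulrA.
Qed.

Lemma opnorm_ub (A : 'M[R]_(3,2)) :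
  ubound [set N (x *m A) | x in [set x : 'rV[R]_3 | supn x <= 1]]
   (N (row ord0 A) + (N (row (lift ord0 ord0) A) + N (row (lift ord0 (lift ord0 ord0)) A))).
Proof.
move=> _ [x /= hx <-]; rewrite mulmx_sum3.
have hb : forall i (r : 'rV[R]_2), N (x 0 i *: r) <= N r.
  move=> i r; rewrite NZ; apply: ler_piMl; first exact: Nge0.
  exact: le_trans (supn_ge _ _) hx.
apply: le_trans (ND _ _) _; apply: lerD => //.
apply: le_trans (ND _ _) _; exact: lerD.
Qed.

Lemma opnorm_ge (A : 'M[R]_(3,2)) x : supn x <= 1 -> N (x *m A) <= opnorm N A.
Proof. by move=> hx; apply: ub_le_sup; [eexists; exact: opnorm_ub | exists x]. Qed.

Lemma opnorm_le (A : 'M[R]_(3,2)) M :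
  (forall x, supn x <= 1 -> N (x *m A) <= M) -> opnorm N A <= M.
Proof.
move=> h; apply: ge_sup; last by move=> _ [x /= hx <-]; exact: h.
exists (N (0 *m A)); exists 0 => //=.
by rewrite /supn !big_ord_recl big_ord0 !mxE normr0 !maxxx ler01.
Qed.

Lemma J_bound F : dualnormL N F = 1 -> forall (A : 'M[R]_(3,2)) l, 0 < l ->
  (forall x, supn x <= 1 -> N (x *m A) <= l) -> pairL F A <= l.
Proof.
move=> hF A l hl hA.
move: hF; rewrite /dualnormL; set E := (X in sup X) => hF.
have hs : has_sup E.
  case: (pselect (has_sup E)) => // hn; move: hF; rewrite sup_out //; lra.
have hop : opnorm N (l^-1 *: A) <= 1.
  apply: opnorm_le => x hx; rewrite -scalemxAr NZp; last by rewrite invr_ge0 ltW.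
  by rewrite ler_pdivrMl // mulr1; apply: hA.
have : `|pairL F (l^-1 *: A)| <= 1.
  by rewrite -hF; apply: (ub_le_sup (proj2 hs)); exists (l^-1 *: A).
rewrite pairLZ normrM ger0_norm; last by rewrite invr_ge0 ltW.
rewrite ler_pdivrMl // mulr1 => h.
exact: le_trans (ler_norm _) h.
Qed.

Lemma F_in_J (T : 'M[R]_(3,2)) x g : supn x <= 1 -> opnorm N T = 1 -> supp (x *m T) g ->
  Jset N T (x^T *m g).
Proof.
move=> hx hT hg; split; last by rewrite pairL_F (proj1 hg).
rewrite /dualnormL; set E := (X in sup X).
have ha := supp_abs _ _ hg.
have ub : ubound E 1.
  move=> _ [S /= hS <-]; rewrite pairL_F; apply: le_trans (ha _) _.
  apply: le_trans hS; exact: opnorm_ge.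
have E1 : E 1 by exists T; [rewrite /= hT | rewrite pairL_F (proj1 hg) normr1].
apply/le_anti/andP; split; first by apply: ge_sup => //; exists 1.
by apply: ub_le_sup => //; exists 1.
Qed.


Lemma kernel_le (T S F : 'M[R]_(3,2)) (g1 g2 g3 g4 : 'rV[R]_2) : smooth N ->
  N (x1 R *m T) = 1 -> supp (x1 R *m T) g1 ->
  N (x2 R *m T) = 1 -> supp (x2 R *m T) g2 ->
  N (x3 R *m T) = 1 -> supp (x3 R *m T) g3 ->
  N (x4 R *m T) = 1 -> supp (x4 R *m T) g4 ->
  Jset N T F ->
  pairY g1 (x1 R *m S) = 0 -> pairY g2 (x2 R *m S) = 0 ->
  pairY g3 (x3 R *m S) = 0 -> pairY g4 (x4 R *m S) = 0 ->
  pairL F S <= 0.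
Proof.
move=> hsm n1 s1 n2 s2 n3 s3 n4 s4 [hF hFT] k1 k2 k3 k4.
rewrite leNgt; apply/negP => hd.
have [t1 [t1p h1]] := @key _ _ _ _ hsm n1 s1 k1 hd.
have [t2 [t2p h2]] := @key _ _ _ _ hsm n2 s2 k2 hd.
have [t3 [t3p h3]] := @key _ _ _ _ hsm n3 s3 k3 hd.
have [t4 [t4p h4]] := @key _ _ _ _ hsm n4 s4 k4 hd.
set s := Num.min (Num.min t1 t2) (Num.min t3 t4).
have hs : 0 < s by rewrite !lt_min t1p t2p t3p t4p.
set A := T + s *: S.
have eA : forall x : 'rV[R]_3, x *m A = x *m T + s *: (x *m S).
  by move=> x; rewrite /A mulmxDr scalemxAr.
have b1 : N (x1 R *m A) < 1 + s * pairL F S.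
  by rewrite eA; apply: h1; rewrite hs /= !ge_min lexx.
have b2 : N (x2 R *m A) < 1 + s * pairL F S.
  by rewrite eA; apply: h2; rewrite hs /= !ge_min lexx !orbT.
have b3 : N (x3 R *m A) < 1 + s * pairL F S.
  by rewrite eA; apply: h3; rewrite hs /= !ge_min lexx !orbT.
have b4 : N (x4 R *m A) < 1 + s * pairL F S.
  by rewrite eA; apply: h4; rewrite hs /= !ge_min lexx !orbT.
set l := Num.max 1 (Num.max (Num.max (N (x1 R *m A)) (N (x2 R *m A)))
                           (Num.max (N (x3 R *m A)) (N (x4 R *m A)))).
have hl : 0 < l by rewrite lt_max ltr01.
have hb : forall x, supn x <= 1 -> N (x *m A) <= l.
  apply: ball_bound => a b [->|->] [->|->].
  - by change (mk3 1 1 1) with (x1 R); rewrite !le_max lexx !orbT.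
  - by change (mk3 1 (-1) 1) with (x4 R); rewrite !le_max lexx !orbT.
  - by change (mk3 (-1) 1 1) with (x2 R); rewrite !le_max lexx !orbT.
  - by change (mk3 (-1) (-1) 1) with (x3 R); rewrite !le_max lexx !orbT.
have := @J_bound F hF A l hl hb.
rewrite /A pairLD pairLZ hFT.
have : l < 1 + s * pairL F S.
  rewrite !gt_max b1 b2 b3 b4 !andbT.
  by have := mulr_gt0 hs hd; lra.
move=> h1' h2'; have := lt_le_trans h1' h2'; by rewrite ltxx.
Qed.

End NormLemmas.

Lemma pairL_vec (G : 'M[R]_(3,2)) n (C : 'M[R]_(3 * 2, n)) j :
  pairL G (vec_mx (\row_k C k j)) = (mxvec G *m C) 0 j.
Proof.
rewrite /pairL mxE (reindex (uncurry (@mxvec_index 3 2))) /=; last exact: curry_mxvec_bij.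
rewrite pair_bigA; apply: eq_bigr => [[i l]] _ /=.
by rewrite mxvecE !mxE.
Qed.

Lemma span_of (n : nat) (Fs : 'I_n -> 'M[R]_(3,2)) (J : set 'M[R]_(3,2)) :
  (forall k, J (Fs k)) ->
  (forall c : 'rV[R]_n, \sum_k c 0 k *: Fs k = 0 -> c = 0) ->
  (forall F, J F -> forall S, (forall k, pairL (Fs k) S = 0) -> pairL F S = 0) ->
  span_dim J n.
Proof.
move=> hJ hind hker.
pose B : 'M[R]_(n, 3 * 2) := \matrix_(k < n) mxvec (Fs k).
exists B; split; first by move=> i; rewrite rowK mxvecK.
split.
  apply: inj_row_free => v hv; apply: hind.
  apply/eqP; rewrite -mxvec_eq0; apply/eqP.
  rewrite raddf_sum; rewrite mulmx_sum_row in hv; rewrite -[X in _ = X]hv; apply: eq_bigr => k _.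
  by rewrite rowK; exact: linearZ.
move=> F hF; case: (boolP (mxvec F <= B)%MS) => // hn; exfalso.
move: hn; rewrite submxE => hn.
have [j hj] : exists j, (mxvec F *m cokermx B) 0 j != 0.
  case: (pselect (exists j, (mxvec F *m cokermx B) 0 j != 0)) => // hc.
  suff e : mxvec F *m cokermx B = 0 by move: hn; rewrite e eqxx.
  apply/rowP => j; rewrite [RHS]mxE.
  by apply/eqP; apply: contraT => hj; exfalso; apply: hc; exists j.
have := hker F hF (vec_mx (\row_k cokermx B k j)).
rewrite pairL_vec => h; move: hj; rewrite h ?eqxx // => k.
by rewrite pairL_vec -(rowK (fun k => mxvec (Fs k))) -/B -row_mul mulmx_coker row0 mxE.
Qed.


Lemma norm1 (l : R) : `|l| = 1 -> l = 1 \/ l = -1.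
Proof.
move/eqP; rewrite eqr_norml => /andP [h _].
by case/orP: h => /eqP h; [left|right].
Qed.

Section Final.
Variable N : 'rV[R]_2 -> R.
Hypothesis hN : is_norm N.

Lemma lemA v v' g g' l : strictly_convex N -> N v = 1 -> N v' = 1 -> supp N v g -> supp N v' g' ->
  g' = l *: g -> v' = v \/ v' = - v.
Proof.
move=> hsc hv hv' hg hg' e.
have a1 := supp_abs N hN _ _ hg; have a2 := supp_abs N hN _ _ hg'.
have l1 : `|l| <= 1 by have := a2 v; rewrite e pairYZl (proj1 hg) mulr1 hv.
have gv' : l * pairY g v' = 1 by rewrite -pairYZl -e (proj1 hg').
have l2 : 1 <= `|l|.
  have := a1 v'; rewrite hv' => h.
  have : `|l * pairY g v'| <= `|l| by rewrite normrM; apply: ler_piMr.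
  by rewrite gv' normr1.
have ll : l = 1 \/ l = -1.
  by apply: norm1; apply/le_anti; rewrite l1 l2.
set u := l *: v'.
have gu : pairY g u = 1 by rewrite pairYZ.
have nu : N u = 1 by rewrite (NZ _ hN) // hv' mulr1; case: ll => ->; rewrite ?normrN normr1.
have vu : v = u.
  apply: hsc => // t /andP [t0 t1].
  apply/le_anti/andP; split.
    apply: le_trans (Nconv N hN _ _ _ _ _ _) _; rewrite ?subr_ge0 //.
    by rewrite hv nu; lra.
  have := (proj2 hg) ((1 - t) *: v + t *: u).
  by rewrite pairYD pairYZ gu pairYZ (proj1 hg); lra.
case: ll => hl; [left | right]; rewrite vu /u hl ?scale1r ?scaleN1r ?opprK //.
Qed.

Lemma lemB v v' g g' (s : R) : smooth N -> N v = 1 -> supp N v g -> supp N v' g' ->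
  (s = 1 \/ s = -1) -> v' = s *: v -> g' = s *: g.
Proof.
move=> hsm hv hg hg' hs e.
have hv' : N v' = 1 by rewrite e (NZ _ hN) // hv mulr1; case: hs => ->; rewrite ?normrN normr1.
have hsg : supp N v' (s *: g).
  split; first by rewrite e pairYZl pairYZ (proj1 hg) mulr1; case: hs => ->; ring.
  move=> y; rewrite pairYZl -pairYZ; apply: le_trans ((proj2 hg) _) _.
  by rewrite (NZ _ hN) //; case: hs => ->; rewrite ?normrN normr1 mul1r.
apply: (hsm v' hv' g' (s *: g)).
- exact: supp_dual N hN _ _ hv' hg'.
- exact: proj1 hg'.
- exact: supp_dual N hN _ _ hv' hsg.
- exact: proj1 hsg.
Qed.

Lemma lemC v v' : N v = 1 -> N v' = 1 -> dd v v' = 0 -> v' = v \/ v' = - v.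
Proof.
move=> hv hv'; rewrite /dd => hd.
have [mu emu] : exists mu, v' = mu *: v.
  have [h0|h0] := eqVneq (v 0 ord0) 0.
  - have h1 : v 0 ord_max != 0.
      apply/negP => /eqP h1.
      have e : v = 0 by apply: rv2P; rewrite mxE.
      by move: hv; rewrite e (N0 _ hN); lra.
    exists (v' 0 ord_max / v 0 ord_max); apply: rv2P; rewrite !mxE.
    + move: hd; rewrite h0 mul0r sub0r => /eqP; rewrite oppr_eq0 mulf_eq0 (negbTE h1) /= => /eqP ->.
      by rewrite mulr0.
    + by field.
  - exists (v' 0 ord0 / v 0 ord0); apply: rv2P; rewrite !mxE.
    + by field.
    + have e : v 0 ord0 * v' 0 ord_max = v 0 ord_max * v' 0 ord0 by lra.
      by rewrite -[v' 0 ord_max](mulKf h0) e; field.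
have : `|mu| = 1 by move: hv'; rewrite emu (NZ _ hN) // hv mulr1.
move/norm1 => [] hm; [left|right]; by rewrite emu hm ?scale1r ?scaleN1r.
Qed.

End Final.

Lemma sum2 (f : 'I_2 -> R) : \sum_i f i = f ord0 + f ord_max.
Proof.
rewrite big_ord_recr big_ord1 /=.
by rewrite (_ : widen_ord _ ord0 = ord0) //; apply: val_inj.
Qed.

Lemma lemD (T : 'M[R]_(3,2)) (x y : 'rV[R]_3) : dd (x *m T) (y *m T) != 0 -> (2 <= \rank T)%N.
Proof.
move=> hd.
pose X : 'M[R]_(2,3) := \matrix_(i, j) (if i == ord0 then x 0 j else y 0 j).
pose W : 'M[R]_(2,2) := X *m T.
have W0 : forall j, W ord0 j = (x *m T) 0 j.
  by move=> j; rewrite !mxE; apply: eq_bigr => l _; rewrite !mxE.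
have W1 : forall j, W ord_max j = (y *m T) 0 j.
  by move=> j; rewrite !mxE; apply: eq_bigr => l _; rewrite !mxE.
have hW : row_free W.
  apply: inj_row_free => r hr.
  have e : forall j, r 0 ord0 * (x *m T) 0 j + r 0 ord_max * (y *m T) 0 j = 0.
    move=> j; have h := congr1 (fun M : 'M[R]_(1,2) => M 0 j) hr.
    by rewrite /= mxE sum2 W0 W1 in h; rewrite h mxE.
  move: hd; rewrite /dd => hd.
  have e0 := e ord0; have e1 := e ord_max.
  set a0 := (x *m T) 0 ord0 in e0 e1 hd; set a1 := (x *m T) 0 ord_max in e0 e1 hd.
  set b0 := (y *m T) 0 ord0 in e0 e1 hd; set b1 := (y *m T) 0 ord_max in e0 e1 hd.
  have r0 : r 0 ord0 * (a0 * b1 - a1 * b0) = 0.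
    have -> : r 0 ord0 * (a0 * b1 - a1 * b0) =
      b1 * (r 0 ord0 * a0 + r 0 ord_max * b0) - b0 * (r 0 ord0 * a1 + r 0 ord_max * b1) by ring.
    by rewrite e0 e1; ring.
  have r1 : r 0 ord_max * (a0 * b1 - a1 * b0) = 0.
    have -> : r 0 ord_max * (a0 * b1 - a1 * b0) =
      a0 * (r 0 ord0 * a1 + r 0 ord_max * b1) - a1 * (r 0 ord0 * a0 + r 0 ord_max * b0) by ring.
    by rewrite e0 e1; ring.
  move/eqP: r0; move/eqP: r1; rewrite !mulf_eq0 (negbTE hd) !orbF => /eqP r1 /eqP r0.
  by apply: rv2P; rewrite mxE.
have : (2 <= \rank W)%N by rewrite row_leq_rank.
move=> h; apply: leq_trans h _; exact: mxrankM_maxr.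
Qed.

Lemma lemE (T : 'M[R]_(3,2)) (s2 s3 : R) :
  x2 R *m T = s2 *: (x1 R *m T) -> x3 R *m T = s3 *: (x1 R *m T) -> (\rank T <= 1)%N.
Proof.
move=> e2 e3.
pose u : 'cV[R]_3 := \col_i [:: (1 - s2) / 2; (s2 - s3) / 2; (1 + s3) / 2]`_i.
have eT : T = u *m (x1 R *m T).
  apply/matrixP => i j; rewrite [RHS]mxE big_ord1.
  have := congr1 (fun M : 'M[R]_(1,2) => M 0 j) e2; have := congr1 (fun M : 'M[R]_(1,2) => M 0 j) e3.
  rewrite /= /x1 /x2 /x3 !mk3_mul !mxE => h3 h2.
  have [->|[->|->]] : i = ord0 \/ i = lift ord0 ord0 \/ i = lift ord0 (lift ord0 ord0).
    by case: i => [[|[|[|]]]] //= H; [left|right;left|right;right]; apply: val_inj.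
  - rewrite /= ; lra.
  - rewrite /= ; lra.
  - rewrite /= ; lra.
rewrite eT; apply: leq_trans (mxrankM_maxr _ _) _; exact: rank_leq_row.
Qed.


Lemma indep4 (g1 g2 g3 g4 : 'rV[R]_2) (c1 c2 c3 c4 : R) :
  c1 *: ((x1 R)^T *m g1) + (c2 *: ((x2 R)^T *m g2) + (c3 *: ((x3 R)^T *m g3) + c4 *: ((x4 R)^T *m g4))) = 0 ->
  c1 *: g1 + c2 *: g2 = 0 /\ c1 *: g1 + c4 *: g4 = 0 /\ c2 *: g2 + c3 *: g3 = 0.
Proof.
move=> h.
have E : forall i j, c1 * ((x1 R) 0 i * g1 0 j) + (c2 * ((x2 R) 0 i * g2 0 j) +
    (c3 * ((x3 R) 0 i * g3 0 j) + c4 * ((x4 R) 0 i * g4 0 j))) = 0.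
  move=> i j; have := congr1 (fun M : 'M[R]_(3,2) => M i j) h.
  by rewrite /= !mxE !big_ord1 !mxE.
have Ej : forall j, [/\ c1 * g1 0 j + c2 * g2 0 j = 0, c1 * g1 0 j + c4 * g4 0 j = 0 &
                        c2 * g2 0 j + c3 * g3 0 j = 0].
  move=> j; have e0 := E ord0 j; have e1 := E (lift ord0 ord0) j;
  have e2 := E (lift ord0 (lift ord0 ord0)) j.
  move: e0 e1 e2; rewrite /x1 /x2 /x3 /x4 !mxE /= => e0 e1 e2.
  split; lra.
split; [|split]; apply: rv2P; rewrite !mxE;
  by case: (Ej ord0) => ? ? ?; case: (Ej ord_max) => ? ? ?.
Qed.

Lemma x4_mul (S : 'M[R]_(3,2)) : x4 R *m S = x1 R *m S - x2 R *m S + x3 R *m S.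
Proof. by rewrite /x1 /x2 /x3 /x4 !mk3_mul; apply/rowP => j; rewrite !mxE; ring. Qed.

End Basic.

Theorem corollary3p10 (R : realType) (N : 'rV[R]_2 -> R) (T : 'M[R]_(3, 2)) :
  is_norm N -> strictly_convex N -> smooth N ->
  opnorm N T = 1 ->
  (forall x : 'rV[R]_3, (MT N T x /\ ext_ball x) <->
     (x = x1 R \/ x = - x1 R \/ x = x2 R \/ x = - x2 R \/
      x = x3 R \/ x = - x3 R \/ x = x4 R \/ x = - x4 R)) ->
  (\rank T = 1%N -> ksmooth N T 3) /\ (\rank T = 2%N -> ksmooth N T 4).
Proof.
move=> hN hsc hsm hT hM.
have hx : forall x, (x = x1 R \/ x = - x1 R \/ x = x2 R \/ x = - x2 R \/
      x = x3 R \/ x = - x3 R \/ x = x4 R \/ x = - x4 R) -> N (x *m T) = 1 /\ supn x <= 1.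
  by move=> x h; have [[h1 h2] _] := (proj2 (hM x)) h; rewrite h2 hT h1.
have [n1 b1] := hx (x1 R) (or_introl erefl).
have [n2 b2] := hx (x2 R) (or_intror (or_intror (or_introl erefl))).
have [n3 b3] := hx (x3 R) (or_intror (or_intror (or_intror (or_intror (or_introl erefl))))).
have [n4 b4] := hx (x4 R)
  (or_intror (or_intror (or_intror (or_intror (or_intror (or_intror (or_introl erefl))))))).
have [g1 s1] := @supp_exists R N hN _ n1.
have [g2 s2] := @supp_exists R N hN _ n2.
have [g3 s3] := @supp_exists R N hN _ n3.
have [g4 s4] := @supp_exists R N hN _ n4.
set F1 := (x1 R)^T *m g1; set F2 := (x2 R)^T *m g2.
set F3 := (x3 R)^T *m g3; set F4 := (x4 R)^T *m g4.
have J1 : Jset N T F1 := @F_in_J R N hN T _ _ b1 hT s1.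
have J2 : Jset N T F2 := @F_in_J R N hN T _ _ b2 hT s2.
have J3 : Jset N T F3 := @F_in_J R N hN T _ _ b3 hT s3.
have J4 : Jset N T F4 := @F_in_J R N hN T _ _ b4 hT s4.
have K4 : forall F, Jset N T F -> forall S, pairL F1 S = 0 -> pairL F2 S = 0 ->
    pairL F3 S = 0 -> pairL F4 S = 0 -> pairL F S = 0.
  move=> F hF S; rewrite /F1 /F2 /F3 /F4 !pairL_F => k1 k2 k3 k4.
  apply/le_anti/andP; split.
    exact: (@kernel_le R N hN T S F g1 g2 g3 g4 hsm n1 s1 n2 s2 n3 s3 n4 s4 hF k1 k2 k3 k4).
  rewrite -oppr_le0 -pairLN.
  apply: (@kernel_le R N hN T (- S) F g1 g2 g3 g4 hsm n1 s1 n2 s2 n3 s3 n4 s4 hF);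
    by rewrite mulmxN pairYN ?k1 ?k2 ?k3 ?k4 oppr0.
have g1n : g1 != 0.
  by apply/negP => /eqP e; move: (proj1 s1); rewrite e pairYE !mxE; lra.
have g2n : g2 != 0.
  by apply/negP => /eqP e; move: (proj1 s2); rewrite e pairYE !mxE; lra.
have g3n : g3 != 0.
  by apply/negP => /eqP e; move: (proj1 s3); rewrite e pairYE !mxE; lra.
have g4n : g4 != 0.
  by apply/negP => /eqP e; move: (proj1 s4); rewrite e pairYE !mxE; lra.
have z : forall (c : R) (g : 'rV[R]_2), g != 0 -> c *: g = 0 -> c = 0.
  by move=> c g gn /eqP; rewrite scaler_eq0 (negbTE gn) orbF => /eqP.
split => hr.
- have sig : forall v', N v' = 1 -> dd R (x1 R *m T) v' = 0 ->
      exists s : R, (s = 1 \/ s = -1) /\ v' = s *: (x1 R *m T).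
    move=> v' hv' hd; case: (@lemC R N hN _ _ n1 hv' hd) => ->; [exists 1 | exists (-1)].
      by rewrite scale1r; split => //; left.
    by rewrite scaleN1r; split => //; right.
  have dk : forall y, N (y *m T) = 1 -> dd R (x1 R *m T) (y *m T) = 0.
    move=> y _; apply/eqP; apply: contraT => hd; have := @lemD R T _ _ hd; by rewrite hr.
  have [t2 [ht2 e2]] := sig _ n2 (dk _ n2).
  have [t3 [ht3 e3]] := sig _ n3 (dk _ n3).
  have [t4 [ht4 e4]] := sig _ n4 (dk _ n4).
  have eg2 := @lemB R N hN _ _ _ _ t2 hsm n1 s1 s2 ht2 e2.
  have eg3 := @lemB R N hN _ _ _ _ t3 hsm n1 s1 s3 ht3 e3.
  have eg4 := @lemB R N hN _ _ _ _ t4 hsm n1 s1 s4 ht4 e4.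
  apply: (@span_of R 3 (fun k => nth 0 [:: F1; F2; F3] k)).
  + by case => [[|[|[|]]]] //= _.
  + move=> c; rewrite !big_ord_recl big_ord0 addr0 /= => h.
    have h' : c 0 ord0 *: F1 + (c 0 (lift ord0 ord0) *: F2 +
        (c 0 (lift ord0 (lift ord0 ord0)) *: F3 + 0 *: F4)) = 0 by rewrite scale0r addr0.
    have [e12 [e14 e23]] := @indep4 R _ _ _ _ _ _ _ _ h'.
    have c1 : c 0 ord0 = 0 by apply: (z _ _ g1n); move: e14; rewrite scale0r addr0.
    have c2 : c 0 (lift ord0 ord0) = 0.
      by apply: (z _ _ g2n); move: e12; rewrite c1 scale0r add0r.
    have c3 : c 0 (lift ord0 (lift ord0 ord0)) = 0.
      by apply: (z _ _ g3n); move: e23; rewrite c2 scale0r add0r.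
    apply/rowP => k; rewrite mxE.
    have [->|[->|->]] : k = ord0 \/ k = lift ord0 ord0 \/ k = lift ord0 (lift ord0 ord0).
      by case: k => [[|[|[|]]]] //= H; [left|right;left|right;right]; apply: val_inj.
    * exact: c1.
    * exact: c2.
    * exact: c3.
  + move=> F hF S hk.
    have k1 := hk ord0; have k2 := hk (lift ord0 ord0);
    have k3 := hk (lift ord0 (lift ord0 ord0)).
    move: k1 k2 k3 => /= k1 k2 k3.
    apply: (K4 F hF S) => //.
    have p1 : pairY g1 (x1 R *m S) = 0 by rewrite -pairL_F.
    have q : forall t (y : 'rV[R]_3) g, (t = 1 \/ t = -1) -> g = t *: g1 ->
        pairL (y^T *m g) S = 0 -> pairY g1 (y *m S) = 0.
      move=> t y g ht -> ; rewrite pairL_F pairYZl => /eqP.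
      by rewrite mulf_eq0; case: ht => ->; rewrite ?oppr_eq0 oner_eq0 /= => /eqP.
    have p2 := q _ _ _ ht2 eg2 k2; have p3 := q _ _ _ ht3 eg3 k3.
    rewrite /F4 pairL_F eg4 pairYZl x4_mul !pairYD pairYN p1 p2 p3; ring.
- have lin : forall a b (ga gb : 'rV[R]_2), b != 0 -> a *: ga + b *: gb = 0 ->
      gb = (- a / b) *: ga.
    move=> a b ga gb bn e; apply: (scalerI bn).
    rewrite scalerA mulrCA mulfV // mulr1 scaleNr; apply/eqP.
    by rewrite -addr_eq0 addrC; apply/eqP.
  apply: (@span_of R 4 (fun k => nth 0 [:: F1; F2; F3; F4] k)).
  + by case => [[|[|[|[|]]]]] //= _.
  + move=> c; rewrite !big_ord_recl big_ord0 addr0 /= => h.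
    have [e12 [e14 e23]] := @indep4 R _ _ _ _ _ _ _ _ h.
    set c1 := c 0 ord0 in e12 e14 e23 *; set c2 := c 0 (lift ord0 ord0) in e12 e14 e23 *.
    set c3 := c 0 (lift ord0 (lift ord0 ord0)) in e12 e14 e23 *.
    set c4 := c 0 (lift ord0 (lift ord0 (lift ord0 ord0))) in e12 e14 e23 *.
    have [c10|c1n] := eqVneq c1 0.
    * have c20 : c2 = 0 by apply: (z _ _ g2n); move: e12; rewrite c10 scale0r add0r.
      have c40 : c4 = 0 by apply: (z _ _ g4n); move: e14; rewrite c10 scale0r add0r.
      have c30 : c3 = 0 by apply: (z _ _ g3n); move: e23; rewrite c20 scale0r add0r.
      apply/rowP => k; rewrite mxE.
      have [->|[->|[->|->]]] : k = ord0 \/ k = lift ord0 ord0 \/ k = lift ord0 (lift ord0 ord0)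
          \/ k = lift ord0 (lift ord0 (lift ord0 ord0)).
        by case: k => [[|[|[|[|]]]]] //= H; [left|right;left|right;right;left|right;right;right];
          apply: val_inj.
      -- exact: c10.
      -- exact: c20.
      -- exact: c30.
      -- exact: c40.
    * exfalso.
      have c2n : c2 != 0.
        apply/negP => /eqP c20; move: e12; rewrite c20 scale0r addr0 => /(z _ _ g1n).
        by apply/eqP.
      have c3n : c3 != 0.
        apply/negP => /eqP c30; move: e23; rewrite c30 scale0r addr0 => /(z _ _ g2n).
        by apply/eqP.
      have eg2 := lin _ _ _ _ c2n e12.
      have eg3 := lin _ _ _ _ c3n e23.
      rewrite eg2 scalerA in eg3.
      have ee2 := @lemA R N hN _ _ _ _ _ hsc n1 n2 s1 s2 eg2.
      have ee3 := @lemA R N hN _ _ _ _ _ hsc n1 n3 s1 s3 eg3.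
      have hs : forall v' : 'rV[R]_2, v' = x1 R *m T \/ v' = - (x1 R *m T) ->
          exists t : R, v' = t *: (x1 R *m T).
        by move=> v' [->|->]; [exists 1; rewrite scale1r | exists (-1); rewrite scaleN1r].
      have [t2 et2] := hs _ ee2; have [t3 et3] := hs _ ee3.
      by have := @lemE R T _ _ et2 et3; rewrite hr.
  + move=> F hF S hk.
    have k1 := hk ord0; have k2 := hk (lift ord0 ord0);
    have k3 := hk (lift ord0 (lift ord0 ord0));
    have k4 := hk (lift ord0 (lift ord0 (lift ord0 ord0))).
    move: k1 k2 k3 k4 => /= k1 k2 k3 k4.
    exact: (K4 F hF S).
Qed.
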